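(* Let $m$ be a positive integer, let $\delta\in\mathbb{F}_{2^{3m}}$ be fixed and let $c\in\mathbb{F}_{2^m}^*$. Then the polynomial \[ f(x)=(x^{2^m}+x+\delta)^{2^{2m}+1}+cx \] is a permutation polynomial of $\mathbb{F}_{2^{3m}}$.
   Context: A polynomial $f\in\mathbb{F}_Q[x]$ is a permutation polynomial of $\mathbb{F}_Q$ if the map $c\mapsto f(c)$ is a bijection of $\mathbb{F}_Q$. $\mathbb{F}_{2^m}$ is viewed as the subfield of $\mathbb{F}_{2^{3m}}$. *)

(* Defs.v *)
From HB Require Import structures.
From mathcomp Require Import all_boot all_order all_algebra all_field.
Set Implicit Arguments. Unset Strict Implicit. Unset Printing Implicit Defensive.
Import GRing.Theory.
Local Open Scope ring_scope.

Definition is_perm_poly (F : finFieldType) (p : {poly F}) : Prop :=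
  bijective (fun c : F => p.[c]).

Definition in_subfield (F : finFieldType) (q : nat) (x : F) : bool :=
  x ^+ q == x.

(* Main.v *)
Require Import Defs.
From HB Require Import structures.
From mathcomp Require Import all_boot all_order all_algebra all_field.
From mathcomp Require Import ring.
Import GRing.Theory.
Local Open Scope ring_scope.

Section Core.
Variables (F : fieldType) (fr : F -> F).
Hypothesis ch2 : 2 \in [pchar F].
Hypothesis frD : forall x y, fr (x + y) = fr x + fr y.
Hypothesis frM : forall x y, fr (x * y) = fr x * fr y.
Hypothesis fr3 : forall x, fr (fr (fr x)) = x.
Variables (c delta : F).
Hypothesis hc : fr c = c.
Hypothesis hc0 : c != 0.

Lemma mod2 (a b k : F) : a - b = k + k -> a = b.
Proof. by rewrite (addrr_pchar2 ch2) => /eqP; rewrite subr_eq0 => /eqP. Qed.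

Definition ff x := fr (fr (fr x + x + delta)) * (fr x + x + delta) + c * x.
Definition hh Y := c * Y + Y * fr Y + Y * fr (fr Y).
Definition Tr Y := Y + fr Y + fr (fr Y).

Lemma key x : hh (fr x + x + delta) = fr (ff x) + ff x + c * delta.
Proof.
rewrite /hh /ff; set Y := fr x + x + delta; have hY : Y = fr x + x + delta by []; clearbody Y.
rewrite !frD !frM fr3 hc {1}hY; ring.
Qed.

Lemma trh Y : Tr (hh Y) = c * Tr Y.
Proof.
rewrite /Tr /hh !frD !frM !fr3 !hc.
apply: (mod2 _ _ (Y * fr Y + Y * fr (fr Y) + fr Y * fr (fr Y))); ring.
Qed.

Lemma frT Y : fr (Tr Y) = Tr Y.
Proof. rewrite /Tr !frD fr3; ring. Qed.

Lemma hh_inj Y1 Y2 : hh Y1 = hh Y2 -> Y1 = Y2.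
Proof.
move=> H.
have hT : Tr Y1 = Tr Y2.
  by apply: (mulfI hc0); rewrite -!trh H.
set T := Tr Y1.
have e1 Y : hh Y = c * Y + Y * (Tr Y + Y).
  rewrite /hh /Tr; apply: (mod2 _ _ (- (Y * Y))); ring.
have : (Y1 - Y2) * (Y1 + Y2 + T + c) = 0.
  have -> : (Y1 - Y2) * (Y1 + Y2 + T + c) = hh Y1 - hh Y2.
    by rewrite !e1 -hT /T; ring.
  by rewrite H subrr.
move/eqP; rewrite mulf_eq0 => /orP[|/eqP E]; first by rewrite subr_eq0 => /eqP.
have hY2 : Y2 = Y1 + (T + c).
  apply: (mod2 _ _ Y2); rewrite -[LHS]add0r -{1}E; ring.
have : Tr Y2 = T + (T + c) + (T + c) + (T + c).
  have frT1 : fr T = T := frT Y1.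
  by rewrite hY2 {1}/Tr !frD !fr3 !hc /T /Tr; ring.
rewrite -hT -/T => E2.
have Tc : T + c = 0.
  have : T - (T + (T + c) + (T + c) + (T + c)) = 0 by rewrite -E2 subrr.
  have -> : T - (T + (T + c) + (T + c) + (T + c)) = - (T + c) + - (T + c) + - (T + c) by ring.
  by rewrite (addrr_pchar2 ch2) add0r => /eqP; rewrite oppr_eq0 => /eqP.
by move: hY2; rewrite Tc addr0.
Qed.

Lemma ff_inj : injective ff.
Proof.
move=> x1 x2 H.
have : hh (fr x1 + x1 + delta) = hh (fr x2 + x2 + delta) by rewrite !key H.
move/hh_inj => EY; move: H; rewrite /ff EY => /addrI; exact: mulfI.
Qed.
End Core.


Theorem proposition1 (F : finFieldType) (m : nat) (hm : (0 < m)%N)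
  (hF : #|F| = (2 ^ (3 * m))%N) (delta c : F)
  (hc : in_subfield (2 ^ m) c) (hc0 : c != 0) :
  is_perm_poly
    (('X ^+ (2 ^ m) + 'X + delta%:P) ^+ (2 ^ (2 * m) + 1) + c *: 'X).
Proof.
rewrite /is_perm_poly; rewrite /in_subfield in hc.
have ch2 : 2 \in [pchar F] by apply: (card_finPcharP hF).
pose fr (x : F) := x ^+ (2 ^ m).
have frD x y : fr (x + y) = fr x + fr y.
  apply: exprDn_pchar; rewrite pnatX; apply/orP; left.
  by rewrite (eq_pnat _ (pcharf_eq ch2)) pnat_id.
have frM x y : fr (x * y) = fr x * fr y by rewrite /fr exprMn.
have fr3 x : fr (fr (fr x)) = x.
  rewrite /fr -!exprM -!expnD.
  have -> : (m + (m + m) = 3 * m)%N by rewrite !mulSn mul0n addn0.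
  by rewrite -hF expf_card.
have E x : (('X ^+ (2 ^ m) + 'X + delta%:P) ^+ (2 ^ (2 * m) + 1) + c *: 'X : {poly F}).[x] = @ff _ fr c delta x.
  rewrite !hornerE mul2n -addnn expnD exprD expr1 exprM /ff /fr; ring.
apply: injF_bij => x1 x2; rewrite !E; exact: (@ff_inj _ fr ch2 frD frM fr3 c delta (eqP hc) hc0).
Qed.
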